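(* Assume the penalty is $D(\hat\mu,P_{s,a})=\sup_{V\in\mathbb R^{\mathcal S}}\big(-\sigma(P_{s,a},V)-\mathbb E_{s'\sim\hat\mu}V(s')\big)$ for all $s,a$ and $\hat\mu\in\Delta(\mathcal S)$. Then for every stationary policy $\pi$, $$\overline V^\star=\widetilde V^\star,\quad \overline V^\pi=\widetilde V^\pi,\quad \overline Q^\star=\widetilde Q^\star,\quad \overline Q^\pi=\widetilde Q^\pi.$$ Writing $V^\star,V^\pi$ for these common values, for every initial state the supremum–infimum defining $\overline V^\star$ is attained by choosing actions via the deterministic stationary policy $\pi^\star(s)\in\arg\max_a\big(r(s,a)-\gamma\sigma(P_{s,a},V^\star)\big)$ and the stationary transition kernel (the same at every time $t$) $\hat P^\star_{s,a}\in\arg\min_{\hat\mu\in\Delta(\mathcal S)}\big(D(\hat\mu,P_{s,a})+\mathbb E_{s'\sim\hat\mu}V^\star(s')\big)$; and the infimum defining $\overline V^\pi$ is attained by the stationary kernel $\hat P^\pi_{s,a}\in\arg\min_{\hat\mu\in\Delta(\mathcal S)}\big(D(\hat\mu,P_{s,a})+\mathbb E_{s'\sim\hat\mu}V^\pi(s')\big)$ used at every time $t$.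
   Context: $\mathcal S$ and $\mathcal A$ are finite sets; $\Delta(\mathcal X)$ denotes the probability simplex over a finite set $\mathcal X$. $P=\{P_{s,a}\}$ with $P_{s,a}\in\Delta(\mathcal S)$ is the nominal transition kernel, $r:\mathcal S\times\mathcal A\to[0,1]$, $\gamma\in[0,1)$. A stationary policy is a map $\pi:\mathcal S\to\Delta(\mathcal A)$. A function $\sigma:\mathbb R^{\mathcal S}\to\mathbb R$ is a convex risk measure if (i) $V'\le V$ pointwise implies $\sigma(V)\le\sigma(V')$; (ii) $\sigma(V+m)=\sigma(V)-m$ for every constant $m$; (iii) $\sigma$ is convex. For each $(s,a)$ a convex risk measure $\sigma(P_{s,a},\cdot)$ is given. It is known (dual representation) that with $D$ as in the claim, $\sigma(P_{s,a},V)=\sup_{\hat\mu\in\Delta(\mathcal S)}(-\mathbb E_{\hat\mu}V-D(\hat\mu,P_{s,a}))$, and $D(\cdot,P_{s,a})$ is convex and lower semicontinuous. Risk-sensitive values: $\widetilde V^\pi$ is the unique solution of $\widetilde V^\pi(s)=\sum_a\pi(a|s)(r(s,a)-\gamma\sigma(P_{s,a},\widetilde V^\pi))$, $\widetilde V^\star$ the unique solution of $\widetilde V^\star(s)=\max_a(r(s,a)-\gamma\sigma(P_{s,a},\widetilde V^\star))$, $\widetilde Q^\pi(s,a)=r(s,a)-\gamma\sigma(P_{s,a},\widetilde V^\pi)$, $\widetilde Q^\star(s,a)=r(s,a)-\gamma\sigma(P_{s,a},\widetilde V^\star)$. Regularized robust values: an adversary picks a sequence $\{\hat P_t\}_{t\ge0}$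 of (time-dependent) transition kernels $\hat P_{t;s,a}\in\Delta(\mathcal S)$; trajectories evolve by $s_{t+1}\sim\hat P_{t;s_t,a_t}$. Then $\overline V^\pi(s)=\inf_{\{\hat P_t\}}\mathbb E\big[\sum_{t\ge0}\gamma^t\big(r(s_t,a_t)+\gamma D(\hat P_{t;s_t,a_t},P_{s_t,a_t})\big)\mid s_0=s\big]$ with $a_t\sim\pi(\cdot|s_t)$; $\overline V^\star(s)$ is the same expression with $\sup$ over all (possibly history-dependent) action choices $\{a_t\}_{t\ge0}$ placed before the $\inf$; $\overline Q^\pi(s,a)$ and $\overline Q^\star(s,a)$ are defined identically but with $a_0=a$ fixed (and actions $a_t$, $t\ge1$, drawn from $\pi$, resp. supremized). *)

(* Defs.v *)
From HB Require Import structures.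
From mathcomp Require Import all_boot all_order all_algebra.
From mathcomp Require Import all_classical all_reals all_analysis.

Set Implicit Arguments.
Unset Strict Implicit.
Unset Printing Implicit Defensive.

Import Order.TTheory GRing.Theory Num.Theory.
Local Open Scope classical_set_scope.
Local Open Scope ring_scope.

Definition is_dist (R : realType) (X : finType) (mu : X -> R) : Prop :=
  (forall x, 0 <= mu x) /\ \sum_(x : X) mu x = 1.

Definition expect (R : realType) (X : finType) (mu V : X -> R) : R :=
  \sum_(x : X) mu x * V x.

Definition convex_risk_measure (R : realType) (S : finType)
    (rho : (S -> R) -> R) : Prop :=
  [/\ (forall V V' : S -> R, (forall s, V' s <= V s) -> rho V <= rho V'),
      (forall (V : S -> R) (m : R), rho (fun s => V s + m) = rho V - m) &
      (forall (V V' : S -> R) (l : R), 0 <= l <= 1 ->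
         rho (fun s => l * V s + (1 - l) * V' s) <= l * rho V + (1 - l) * rho V')].

Definition penalty (R : realType) (S : finType)
    (sigma : (S -> R) -> (S -> R) -> R) (p muh : S -> R) : \bar R :=
  ereal_sup [set ((- sigma p V - expect muh V)%R)%:E | V in [set: S -> R]].

(* A (general, randomized, history-dependent) action rule:
   pol h x a = probability of choosing action a in current state x after the
   history h.  Histories are lists of past (state, action) pairs, MOST RECENT
   FIRST; the time index of the current step equals size h. *)
Definition hpolicy (S A : finType) (R : realType) := seq (S * A) -> S -> A -> R.

Definition kseq (S A : finType) (R : realType) := nat -> S -> A -> S -> R.

Definition admissible_kseq (R : realType) (S A : finType) (Pt : kseq S A R)
  : Prop := forall t s a, is_dist (Pt t s a).

Fixpoint hprob (R : realType) (S A : finType) (pol : hpolicy S A R)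
    (Pt : kseq S A R) (s0 : S) (h : seq (S * A)) (s : S) : R :=
  match h with
  | [::] => (s == s0)%:R
  | (x, a) :: h' =>
      hprob pol Pt s0 h' x * pol h' x a * Pt (size h') x a s
  end.

Definition stage_cost (R : realType) (S A : finType)
    (P : S -> A -> S -> R) (r : S -> A -> R) (gamma : R)
    (sigma : (S -> R) -> (S -> R) -> R) (Pt : kseq S A R) (t : nat)
    (s : S) (a : A) : \bar R :=
  ((r s a)%:E + gamma%:E * penalty sigma (P s a) (Pt t s a))%E.

Definition exp_cost (R : realType) (S A : finType)
    (P : S -> A -> S -> R) (r : S -> A -> R) (gamma : R)
    (sigma : (S -> R) -> (S -> R) -> R) (pol : hpolicy S A R)
    (Pt : kseq S A R) (s0 : S) (t : nat) : \bar R :=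
  (\sum_(h : t.-tuple (S * A)) \sum_(s : S) \sum_(a : A)
     (hprob pol Pt s0 h s * pol h s a)%:E
       * stage_cost P r gamma sigma Pt t s a)%E.

Definition total_cost (R : realType) (S A : finType)
    (P : S -> A -> S -> R) (r : S -> A -> R) (gamma : R)
    (sigma : (S -> R) -> (S -> R) -> R) (pol : hpolicy S A R)
    (Pt : kseq S A R) (s0 : S) : \bar R :=
  (\sum_(t <oo) (gamma ^+ t)%:E * exp_cost P r gamma sigma pol Pt s0 t)%E.

Definition adv_inf (R : realType) (S A : finType)
    (P : S -> A -> S -> R) (r : S -> A -> R) (gamma : R)
    (sigma : (S -> R) -> (S -> R) -> R) (pol : hpolicy S A R) (s0 : S)
  : \bar R :=
  ereal_inf [set total_cost P r gamma sigma pol Pt s0 | Pt in [set Pt : kseq S A R | admissible_kseq Pt]].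

Definition is_policy (R : realType) (S A : finType) (pi : S -> A -> R) : Prop :=
  forall s, is_dist (pi s).

Definition stat_pol (R : realType) (S A : finType) (pi : S -> A -> R)
  : hpolicy S A R := fun _ x a => pi x a.

Definition det_pol (R : realType) (S A : finType) (f : seq (S * A) -> S -> A)
  : hpolicy S A R := fun h x a => (a == f h x)%:R.

Definition first_then (R : realType) (S A : finType) (a0 : A)
    (pol : hpolicy S A R) : hpolicy S A R :=
  fun h x a => if h is [::] then (a == a0)%:R else pol h x a.

Definition Vbar_pi (R : realType) (S A : finType) (P : S -> A -> S -> R)
    (r : S -> A -> R) (gamma : R) (sigma : (S -> R) -> (S -> R) -> R)
    (pi : S -> A -> R) (s : S) : \bar R :=
  adv_inf P r gamma sigma (stat_pol pi) s.

Definition Qbar_pi (R : realType) (S A : finType) (P : S -> A -> S -> R)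
    (r : S -> A -> R) (gamma : R) (sigma : (S -> R) -> (S -> R) -> R)
    (pi : S -> A -> R) (s : S) (a : A) : \bar R :=
  adv_inf P r gamma sigma (first_then a (stat_pol pi)) s.

Definition Vbar_star (R : realType) (S A : finType) (P : S -> A -> S -> R)
    (r : S -> A -> R) (gamma : R) (sigma : (S -> R) -> (S -> R) -> R)
    (s : S) : \bar R :=
  ereal_sup [set adv_inf P r gamma sigma (@det_pol R S A f) s
            | f in [set: seq (S * A) -> S -> A]].

Definition Qbar_star (R : realType) (S A : finType) (P : S -> A -> S -> R)
    (r : S -> A -> R) (gamma : R) (sigma : (S -> R) -> (S -> R) -> R)
    (s : S) (a : A) : \bar R :=
  ereal_sup [set adv_inf P r gamma sigma (first_then a (@det_pol R S A f)) s
            | f in [set: seq (S * A) -> S -> A]].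

Definition Qtilde (R : realType) (S A : finType) (P : S -> A -> S -> R)
    (r : S -> A -> R) (gamma : R) (sigma : (S -> R) -> (S -> R) -> R)
    (V : S -> R) (s : S) (a : A) : R :=
  r s a - gamma * sigma (P s a) V.

Definition is_Vtilde_pi (R : realType) (S A : finType) (P : S -> A -> S -> R)
    (r : S -> A -> R) (gamma : R) (sigma : (S -> R) -> (S -> R) -> R)
    (pi : S -> A -> R) (V : S -> R) : Prop :=
  forall s, V s = \sum_(a : A) pi s a * Qtilde P r gamma sigma V s a.

Definition is_Vtilde_star (R : realType) (S A : finType) (P : S -> A -> S -> R)
    (r : S -> A -> R) (gamma : R) (sigma : (S -> R) -> (S -> R) -> R)
    (V : S -> R) : Prop :=
  forall s, (exists a, V s = Qtilde P r gamma sigma V s a) /\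
            (forall a, Qtilde P r gamma sigma V s a <= V s).

Definition is_argmin_kernel (R : realType) (S : finType)
    (sigma : (S -> R) -> (S -> R) -> R) (p : S -> R) (V : S -> R)
    (muh : S -> R) : Prop :=
  is_dist muh /\
  forall mu, is_dist mu ->
    (penalty sigma p muh + (expect muh V)%:E <= penalty sigma p mu + (expect mu V)%:E)%E.

(* Main.v *)
Require Import Defs.
From HB Require Import structures.
From mathcomp Require Import all_boot all_order all_algebra.
From mathcomp Require Import all_classical all_reals all_analysis.
From mathcomp Require Import ring lra.
Import Order.TTheory GRing.Theory Num.Theory.
Import numFieldNormedType.Exports.
Local Open Scope classical_set_scope.
Local Open Scope ring_scope.
Set Implicit Arguments.
Unset Strict Implicit.
Unset Printing Implicit Defensive.
Lemma div_le_div (R : realType) (x y s t : R) : 0 < s -> 0 < t -> x * t <= y * s -> x / s <= y / t.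
Proof.
move=> s0 t0 h.
rewrite ler_pdivrMr // mulrAC ler_pdivlMr //.
Qed.
Definition lin (R : realType) (S : finType) (g W : S -> R) : R := \sum_s g s * W s.

Lemma linD (R : realType) (S : finType) (g A B : S -> R) (a b : R) :
  lin g (fun s => a * A s + b * B s) = a * lin g A + b * lin g B.
Proof.
rewrite /lin !mulr_sumr -big_split /=; apply: eq_bigr => s _; ring.
Qed.

Lemma hb_ext (R : realType) (S : finType) (F : (S -> R) -> R)
  (Fconv : forall (A B : S -> R) (l : R), 0 <= l <= 1 ->
      F (fun s => l * A s + (1 - l) * B s) <= l * F A + (1 - l) * F B)
  (F0 : F (fun _ => 0) = 0) (X : seq S) :
  exists g : S -> R, forall W : S -> R, (forall s, s \notin X -> W s = 0) ->
    lin g W <= F W.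
Proof.
elim: X => [|e X [g Hg]].
  exists (fun _ => 0) => W HW.
  have -> : W = (fun _ => 0) by apply/funext => s; exact: HW.
  by rewrite F0 /lin big1 // => s _; rewrite mul0r.
pose e1 : S -> R := fun s => (s == e)%:R.
pose supp (m : S -> R) := forall s, s \notin X -> m s = 0.
have key : forall m1 m2 s t, supp m1 -> supp m2 -> 0 < s -> 0 < t ->
    (lin g m2 - F (fun x => m2 x - s * e1 x)) / s <=
    (F (fun x => m1 x + t * e1 x) - lin g m1) / t.
  move=> m1 m2 s t h1 h2 s0 t0.
  apply: div_le_div => //.
  pose l := t / (s + t).
  have st0 : 0 < s + t by rewrite addr_gt0.
  have stn : s + t != 0 by apply/negbT/gt_eqF.
  have l01 : 0 <= l <= 1.
    apply/andP; split; first by rewrite divr_ge0 // ltW.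
    by rewrite ler_pdivrMr // mul1r lerDr ltW.
  have hc := Fconv (fun x => m2 x - s * e1 x) (fun x => m1 x + t * e1 x) l l01.
  have eqm : (fun x => l * (m2 x - s * e1 x) + (1 - l) * (m1 x + t * e1 x)) =
             (fun x => l * m2 x + (1 - l) * m1 x).
    by apply/funext => x; rewrite /l; field.
  rewrite eqm in hc.
  have hm : supp (fun x => l * m2 x + (1 - l) * m1 x).
    by move=> x hx; rewrite h1 // h2 // !mulr0 addr0.
  have := Hg _ hm; rewrite linD => hl.
  have h := le_trans hl hc.
  have e1' : forall u v, (s + t) * (l * u + (1 - l) * v) = t * u + s * v.
    by move=> u v; rewrite /l; field.
  have : (s + t) * (l * lin g m2 + (1 - l) * lin g m1) <=
         (s + t) * (l * F (fun x => m2 x - s * e1 x) + (1 - l) * F (fun x => m1 x + t * e1 x)).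
    by rewrite ler_pM2l.
  rewrite !e1' => h'. nra.
pose L := [set x : R | exists m s, supp m /\ 0 < s /\
   x = (lin g m - F (fun y => m y - s * e1 y)) / s].
have L0 : L !=set0.
  by exists ((lin g (fun _ => 0) - F (fun y => 0 - 1 * e1 y)) / 1); exists (fun _ => 0), 1.
have Lub : forall m1 t, supp m1 -> 0 < t ->
    ubound L ((F (fun x => m1 x + t * e1 x) - lin g m1) / t).
  by move=> m1 t h1 t0 _ [m [s [hm [s0 ->]]]]; exact: key.
have hs : has_sup L.
  by split => //; eexists; apply: (Lub (fun _ => 0) 1).
pose c := sup L.
exists (fun x => if x == e then c else g x) => W HW.
pose w := W e. pose m := fun x => if x == e then 0 else W x.
have hm : supp m.
  move=> x hx; rewrite /m; case: eqP => // /eqP xe; apply: HW.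
  by rewrite in_cons negb_or xe hx.
have linW : lin (fun x => if x == e then c else g x) W = lin g m + c * w.
  rewrite /lin (bigD1 e) //= eqxx [in RHS](bigD1 e) //= /m eqxx mulr0 add0r addrC.
  congr (_ + _); apply: eq_bigr => x /negPf xe; by rewrite xe.
have WE : W = (fun x => m x + w * e1 x).
  apply/funext => x; rewrite /m /e1 /w; case: eqP => [->|_].
    by rewrite mulr1 add0r.
  by rewrite mulr0 addr0.
rewrite linW.
case: (ltgtP w 0) => hw.
- have hw' : 0 < - w by rewrite oppr_gt0.
  have inL : L ((lin g m - F (fun y => m y - (- w) * e1 y)) / (- w)).
    by exists m, (- w).
  have := sup_upper_bound hs inL; rewrite -/c.
  have -> : (fun y => m y - (- w) * e1 y) = W.
    by rewrite WE; apply/funext => y; ring.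
  rewrite ler_pdivrMr // => h; nra.
- have := ge_sup L0 (Lub m w hm hw); rewrite -/c.
  rewrite -WE ler_pdivlMr // => h; nra.
- have := Hg m hm; have -> : m = W by rewrite WE hw; apply/funext => y; ring.
  by rewrite hw mulr0 addr0.
Qed.
Lemma expectN (R : realType) (S : finType) (g W : S -> R) :
  expect (fun s => - g s) W = - lin g W.
Proof. by rewrite /expect /lin -sumrN; apply: eq_bigr => s _; ring. Qed.

Lemma linB (R : realType) (S : finType) (g W V : S -> R) :
  lin g (fun s => W s - V s) = lin g W - lin g V.
Proof. by rewrite /lin -sumrB; apply: eq_bigr => s _; ring. Qed.

Lemma subgrad (R : realType) (S : finType) (rho : (S -> R) -> R)
  (hrho : convex_risk_measure rho) (V : S -> R) :
  exists mu : S -> R, is_dist mu /\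
    forall W, - rho W - expect mu W <= - rho V - expect mu V.
Proof.
case: hrho => hmon hcash hconv.
pose F := fun W : S -> R => rho (fun s => V s + W s) - rho V.
have Fconv : forall A B l, 0 <= l <= 1 ->
    F (fun s => l * A s + (1 - l) * B s) <= l * F A + (1 - l) * F B.
  move=> A B l hl; rewrite /F.
  have -> : (fun s => V s + (l * A s + (1 - l) * B s)) =
            (fun s => l * (V s + A s) + (1 - l) * (V s + B s)).
    by apply/funext => s; ring.
  have := hconv (fun s => V s + A s) (fun s => V s + B s) l hl; lra.
have F0 : F (fun _ => 0) = 0.
  rewrite /F; have -> : (fun s => V s + 0) = V by apply/funext => s; rewrite addr0.
  by rewrite subrr.
have [g Hg] := hb_ext Fconv F0 (enum S).
have Hg' : forall W, lin g W <= F W by move=> W; apply: Hg => s; rewrite mem_enum.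
exists (fun s => - g s); split; first split.
- move=> s; rewrite oppr_ge0.
  have := Hg' (fun x => (x == s)%:R).
  have -> : lin g (fun x => (x == s)%:R) = g s.
    rewrite /lin (bigD1 s) //= eqxx mulr1 big1 ?addr0 // => x /negPf ->.
    by rewrite mulr0.
  have : F (fun x => (x == s)%:R) <= 0.
    by rewrite /F subr_le0; apply: hmon => x; rewrite lerDl ler0n.
  lra.
- have h1 := Hg' (fun _ => 1). have h2 := Hg' (fun _ => -1).
  have e1 : F (fun _ => 1) = -1 by rewrite /F hcash; ring.
  have e2 : F (fun _ => -1) = 1 by rewrite /F hcash; ring.
  have l1 : lin g (fun _ => 1) = \sum_s g s by apply: eq_bigr => s _; rewrite mulr1.
  have l2 : lin g (fun _ => -1) = - \sum_s g s.
    by rewrite -sumrN; apply: eq_bigr => s _; rewrite mulrN1.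
  rewrite sumrN; lra.
- move=> W; have := Hg' (fun s => W s - V s); rewrite /F.
  have -> : (fun s => V s + (W s - V s)) = W by apply/funext => s; ring.
  rewrite linB !expectN; lra.
Qed.
Lemma penalty_ge (R : realType) (S : finType) (sigma : (S -> R) -> (S -> R) -> R)
  (p mu V : S -> R) :
  ((- sigma p V - expect mu V)%:E <= penalty sigma p mu)%E.
Proof. by apply: ereal_sup_ubound; exists V. Qed.

Lemma penalty_exact (R : realType) (S : finType) (sigma : (S -> R) -> (S -> R) -> R)
  (p : S -> R) (hs : convex_risk_measure (sigma p)) (V : S -> R) :
  exists mu, is_dist mu /\ penalty sigma p mu = (- sigma p V - expect mu V)%:E.
Proof.
have [mu [hmu H]] := subgrad hs V; exists mu; split => //.
apply/le_anti/andP; split; last exact: penalty_ge.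
by apply: ge_ereal_sup => _ [W _ <-]; rewrite lee_fin; exact: H.
Qed.

Lemma argmin_exact (R : realType) (S : finType) (sigma : (S -> R) -> (S -> R) -> R)
  (p : S -> R) (hs : convex_risk_measure (sigma p)) (V muh : S -> R)
  (h : is_argmin_kernel sigma p V muh) :
  penalty sigma p muh = (- sigma p V - expect muh V)%:E.
Proof.
case: h => hd hmin.
have [mu [hmu e]] := penalty_exact hs V.
have := hmin mu hmu; rewrite e -EFinD.
have := penalty_ge sigma p muh V.
case: (penalty sigma p muh) => [x| |] //=.
by rewrite -EFinD !lee_fin => h1 h2; congr EFin; lra.
Qed.
Lemma lim_dec (R : realType) (P M : nat -> \bar R) (y : nat -> R) (l : R)
 (hP : forall n, P n.+1 = ((y n)%:E + M n)%E) (hy : y n @[n --> \oo] --> l)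
 (hM : cvgn M) :
 lim (P @ \oo) = (l%:E + lim (M @ \oo))%E.
Proof.
apply: cvg_lim => //.
rewrite -cvg_shiftS.
have -> : [sequence P n.+1]_n = (fun n => (y n)%:E + M n)%E.
  by apply/funext => n; rewrite /= hP.
apply: cvgeD; first exact: fin_num_adde_defr.
- by apply: cvg_EFin; [exact: nearW | exact: hy].
- exact: hM.
Qed.

Lemma tele (R : realType) (a b : nat -> R) (g : R) n :
 \sum_(0 <= t < n.+1) g^+t * (b t - g * a t.+1) =
 b 0 - g^+n.+1 * a n.+1 +
   \sum_(0 <= t < n.+1) (if t is 0 then 0 else g^+t * (b t - a t)).
Proof.
elim: n => [|n IH]; first by rewrite !big_nat1 /= expr0 expr1; ring.
rewrite big_nat_recr //= IH [in RHS]big_nat_recr //= !exprS; ring.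
Qed.

Lemma geo_cvg0 (R : realType) (a : nat -> R) (g B : R) (hg : 0 <= g < 1)
  (hB : forall t, -B <= a t <= B) :
  (fun n => g^+n.+1 * a n.+1) @ \oo --> 0.
Proof.
have g1 : `|g| < 1 by rewrite ger0_norm //; case/andP: hg.
have c0 : (fun n => g ^+ n.+1) @ \oo --> (0 : R).
  by rewrite (cvg_shiftS (fun n => g ^+ n)); exact: cvg_expr.
have c1 : (fun n => B * g ^+ n.+1) @ \oo --> (0 : R).
  by rewrite -(mulr0 B); apply: cvgM => //; exact: cvg_cst.
have c2 : (fun n => - B * g ^+ n.+1) @ \oo --> (0 : R).
  by rewrite -(mulr0 (- B)); apply: cvgM => //; exact: cvg_cst.
have H : \forall n \near \oo, - B * g ^+ n.+1 <= g ^+ n.+1 * a n.+1 <= B * g ^+ n.+1.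
  apply: nearW => n.
  have gn : 0 <= g ^+ n.+1 by rewrite exprn_ge0 //; case/andP: hg.
  have := hB n.+1; case/andP => h1 h2.
  by rewrite !(mulrC _ (g ^+ n.+1)) !ler_wpM2l.
exact: (squeeze_cvgr H c2 c1).
Qed.

Lemma series_lower (R : realType) (u : nat -> \bar R) (a b : nat -> R) (g B : R)
 (hg : 0 <= g < 1) (hB : forall t, -B <= a t <= B)
 (hu : forall t, ((b t - g * a t.+1)%:E <= u t)%E)
 (hb : forall t, (0 < t)%N -> a t <= b t) :
 ((b 0)%:E <= \sum_(t <oo) (g ^+ t)%:E * u t)%E.
Proof.
have g0 : 0 <= g by case/andP: hg.
pose c t := b t - g * a t.+1.
pose d t := ((g ^+ t)%:E * u t - (g ^+ t * c t)%:E)%E.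
have d0 : forall t, (0 <= d t)%E.
  move=> t; rewrite /d sube_ge0 ?fin_numE ?orbT // EFinM.
  by apply: lee_wpmul2l; [rewrite lee_fin exprn_ge0 | exact: hu].
have e : forall t, ((g^+t)%:E * u t = (g^+t * c t)%R%:E + d t)%E.
  by move=> t; rewrite /d addeC subeK.
clearbody d.
pose f t := (d t + (if t is 0 then 0 else g^+t * (b t - a t))%:E)%E.
have f0 : forall t, (0 <= f t)%E.
  move=> t; apply: adde_ge0 => //; case: t => // t.
  by rewrite lee_fin mulr_ge0 ?exprn_ge0 // subr_ge0 hb.
pose M n := \sum_(0 <= t < n.+1) f t.
pose y n := b 0 - g^+n.+1 * a n.+1.
have hP : forall n, (\sum_(0 <= t < n.+1) (g^+t)%R%:E * u t = (y n)%:E + M n)%E.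
  move=> n.
  rewrite (eq_bigr _ (fun t _ => e t)).
  rewrite big_split /= sumEFin tele /M /f big_split /= sumEFin.
  by rewrite EFinD addeAC addeA.
have hy : y n @[n --> \oo] --> b 0.
  have := cvgB (cvg_cst (b 0)) (geo_cvg0 hg hB); rewrite subr0; exact.
have hM : cvgn M.
  have := is_cvg_nneseries (P := predT) (N := 0) (fun n _ _ => f0 n).
  move/cvg_ex => [l hl]; apply/cvg_ex; exists l.
  by rewrite -cvg_shiftS in hl.
rewrite (lim_dec hP hy hM); apply: leeDl.
apply: lime_ge => //; apply: nearW => n; exact: sume_ge0.
Qed.

Lemma series_upper (R : realType) (u : nat -> \bar R) (a b : nat -> R) (g B : R)
 (hg : 0 <= g < 1) (hB : forall t, -B <= a t <= B)
 (hu : forall t, u t = (b t - g * a t.+1)%:E)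
 (hb : forall t, (0 < t)%N -> b t <= a t) :
 (\sum_(t <oo) (g ^+ t)%:E * u t <= (b 0)%:E)%E.
Proof.
have g0 : 0 <= g by case/andP: hg.
pose f t : \bar R := (if t is 0 then 0 else g^+t * (a t - b t))%:E.
have f0 : forall t, (0 <= f t)%E.
  move=> t; case: t => [|t]; rewrite /f lee_fin //.
  by rewrite mulr_ge0 ?exprn_ge0 // subr_ge0 hb.
pose M n := (- \sum_(0 <= t < n.+1) f t)%E.
pose y n := b 0 - g^+n.+1 * a n.+1.
have hP : forall n, (\sum_(0 <= t < n.+1) (g^+t)%R%:E * u t = (y n)%:E + M n)%E.
  move=> n.
  under eq_bigr do rewrite hu -EFinM.
  rewrite sumEFin tele /M /f sumEFin -EFinN -EFinD; congr EFin.
  rewrite /y -sumrN; congr (_ + _); apply: eq_bigr => -[|t] _ //=.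
    by rewrite oppr0.
  by rewrite -mulrN opprB.
have hy : y n @[n --> \oo] --> b 0.
  have := cvgB (cvg_cst (b 0)) (geo_cvg0 hg hB); rewrite subr0; exact.
have hM : cvgn M.
  have := is_cvg_nneseries (P := predT) (N := 0) (fun n _ _ => f0 n).
  move/cvg_ex => [l hl]; apply/cvg_ex; exists (- l)%E.
  rewrite -cvg_shiftS in hl.
  exact: cvgeN hl.
rewrite (lim_dec hP hy hM); rewrite -[leRHS]adde0; apply: leeD2l.
apply: lime_le => //; apply: nearW => n; rewrite /M oppe_le0; exact: sume_ge0.
Qed.
Lemma sum_tuple0 (R : realType) (T : finType) (F : 0.-tuple T -> R) :
  \sum_(h : 0.-tuple T) F h = F [tuple].
Proof. by rewrite (big_pred1 [tuple]) // => h; apply/esym/eqP/tuple0. Qed.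

Lemma sum_tupleS (R : realType) (T : finType) n (F : n.+1.-tuple T -> R) :
  \sum_(h : n.+1.-tuple T) F h =
  \sum_(x : T) \sum_(h : n.-tuple T) F [tuple of x :: h].
Proof.
rewrite pair_big /=.
rewrite (reindex (fun p : T * n.-tuple T => [tuple of p.1 :: p.2])) //=.
exists (fun t : n.+1.-tuple T => (thead t, [tuple of behead t])).
  move=> [x h] _ /=; rewrite theadE; congr pair; exact: val_inj.
by move=> t _; rewrite [RHS]tuple_eta.
Qed.

Lemma hprob_ge0 (R : realType) (S A : finType) (pol : hpolicy S A R)
  (Pt : kseq S A R) (s0 : S)
  (hpol : forall h x a, 0 <= pol h x a) (hPt : forall t x a s, 0 <= Pt t x a s)
  (h : seq (S * A)) (s : S) : 0 <= hprob pol Pt s0 h s.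
Proof.
elim: h s => [|[x a] h IH] s /=; first by rewrite ler0n.
by rewrite !mulr_ge0.
Qed.

Lemma hprob_step (R : realType) (S A : finType) (pol : hpolicy S A R)
  (Pt : kseq S A R) (s0 : S) (G : S -> R) t :
  \sum_(h : t.+1.-tuple (S * A)) \sum_(s : S) hprob pol Pt s0 h s * G s =
  \sum_(h : t.-tuple (S * A)) \sum_(x : S) \sum_(a : A)
     hprob pol Pt s0 h x * pol h x a * expect (Pt t x a) G.
Proof.
rewrite sum_tupleS exchange_big /=; apply: eq_bigr => h _.
rewrite [RHS]pair_big /=; apply: eq_bigr => -[x a] _ /=.
rewrite size_tuple /expect mulr_sumr; apply: eq_bigr => s _; ring.
Qed.

Lemma sum_indic (R : realType) (S : finType) (s0 : S) (G : S -> R) :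
  \sum_(s : S) (s == s0)%:R * G s = G s0.
Proof.
rewrite (bigD1 s0) //= eqxx mul1r big1 ?addr0 // => s /negPf ->.
by rewrite mul0r.
Qed.

Definition aV (R : realType) (S A : finType) (pol : hpolicy S A R)
  (Pt : kseq S A R) (s0 : S) (V : S -> R) (t : nat) : R :=
  \sum_(h : t.-tuple (S * A)) \sum_(s : S) hprob pol Pt s0 h s * V s.

Definition bQ (R : realType) (S A : finType) (pol : hpolicy S A R)
  (Pt : kseq S A R) (s0 : S) (Q : S -> A -> R) (t : nat) : R :=
  \sum_(h : t.-tuple (S * A)) \sum_(s : S) \sum_(a : A)
     hprob pol Pt s0 h s * pol h s a * Q s a.

Lemma aV_mass (R : realType) (S A : finType) (pol : hpolicy S A R)
  (Pt : kseq S A R) (s0 : S)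
  (hpol : forall h x, is_dist (pol h x)) (hPt : admissible_kseq Pt) t :
  aV pol Pt s0 (fun _ => 1) t = 1.
Proof.
elim: t => [|t IH].
  by rewrite /aV sum_tuple0 /= (sum_indic s0 (fun _ => 1)).
rewrite /aV hprob_step -[RHS]IH /aV; apply: eq_bigr => h _; apply: eq_bigr => x _.
have -> : \sum_(a : A) hprob pol Pt s0 h x * pol h x a * expect (Pt t x a) (fun=> 1)
          = hprob pol Pt s0 h x * \sum_(a : A) pol h x a.
  rewrite mulr_sumr; apply: eq_bigr => a _.
  have -> : expect (Pt t x a) (fun=> 1) = 1.
    by rewrite /expect -[RHS](proj2 (hPt t x a)); apply: eq_bigr => s _; rewrite mulr1.
  by rewrite mulr1.
by rewrite (proj2 (hpol h x)).
Qed.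

Lemma aV_bound (R : realType) (S A : finType) (pol : hpolicy S A R)
  (Pt : kseq S A R) (s0 : S)
  (hpol : forall h x, is_dist (pol h x)) (hPt : admissible_kseq Pt)
  (V : S -> R) (B : R) (hB : forall s, - B <= V s <= B) t :
  - B <= aV pol Pt s0 V t <= B.
Proof.
have hw : forall (h : seq (S * A)) s, 0 <= hprob pol Pt s0 h s.
  by apply: hprob_ge0 => [h x a|u x a s]; [exact: (proj1 (hpol h x)) | exact: (proj1 (hPt u x a))].
have m := aV_mass s0 hpol hPt t.
apply/andP; split.
- have -> : - B = aV pol Pt s0 (fun _ => - B) t.
    rewrite /aV -[LHS]mulr1 -m /aV mulr_sumr; apply: eq_bigr => h _.
    by rewrite mulr_sumr; apply: eq_bigr => s _; ring.
  apply: ler_sum => h _; apply: ler_sum => s _; apply: ler_wpM2l => //.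
  by case/andP: (hB s).
- have -> : B = aV pol Pt s0 (fun _ => B) t.
    rewrite /aV -[LHS]mulr1 -m /aV mulr_sumr; apply: eq_bigr => h _.
    by rewrite mulr_sumr; apply: eq_bigr => s _; ring.
  apply: ler_sum => h _; apply: ler_sum => s _; apply: ler_wpM2l => //.
  by case/andP: (hB s).
Qed.
Lemma bQ_aV (R : realType) (S A : finType) (pol : hpolicy S A R)
  (Pt : kseq S A R) (s0 : S) (V : S -> R) (Q : S -> A -> R) (gamma : R) t :
  bQ pol Pt s0 Q t - gamma * aV pol Pt s0 V t.+1 =
  \sum_(h : t.-tuple (S * A)) \sum_(s : S) \sum_(a : A)
    hprob pol Pt s0 h s * pol h s a * (Q s a - gamma * expect (Pt t s a) V).
Proof.
rewrite /bQ /aV hprob_step mulr_sumr -sumrB; apply: eq_bigr => h _.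
rewrite mulr_sumr -sumrB; apply: eq_bigr => s _.
rewrite mulr_sumr -sumrB; apply: eq_bigr => a _; ring.
Qed.

Lemma exp_cost_lower (R : realType) (S A : finType) (P : S -> A -> S -> R)
  (r : S -> A -> R) (gamma : R) (sigma : (S -> R) -> (S -> R) -> R)
  (pol : hpolicy S A R) (Pt : kseq S A R) (s0 : S) (V : S -> R)
  (hg : 0 <= gamma) (hpol : forall h x a, 0 <= pol h x a)
  (hPt : admissible_kseq Pt) t :
  ((bQ pol Pt s0 (Qtilde P r gamma sigma V) t - gamma * aV pol Pt s0 V t.+1)%:E
     <= exp_cost P r gamma sigma pol Pt s0 t)%E.
Proof.
rewrite bQ_aV /exp_cost -sumEFin; apply: lee_sum => h _.
rewrite -sumEFin; apply: lee_sum => s _.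
rewrite -sumEFin; apply: lee_sum => a _.
rewrite EFinM; apply: lee_wpmul2l.
  rewrite lee_fin mulr_ge0 //; apply: hprob_ge0 => // u x b s'.
  exact: (proj1 (hPt u x b)).
rewrite /stage_cost /Qtilde.
have -> : r s a - gamma * sigma (P s a) V - gamma * expect (Pt t s a) V =
   r s a + gamma * (- sigma (P s a) V - expect (Pt t s a) V) by ring.
rewrite EFinD EFinM; apply: leeD2l; apply: lee_wpmul2l; first by rewrite lee_fin.
exact: penalty_ge.
Qed.

Lemma exp_cost_exact (R : realType) (S A : finType) (P : S -> A -> S -> R)
  (r : S -> A -> R) (gamma : R) (sigma : (S -> R) -> (S -> R) -> R)
  (pol : hpolicy S A R) (Phat : S -> A -> S -> R) (s0 : S) (V : S -> R)
  (hex : forall s a, penalty sigma (P s a) (Phat s a) =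
                     (- sigma (P s a) V - expect (Phat s a) V)%:E) t :
  exp_cost P r gamma sigma pol (fun _ => Phat) s0 t =
  (bQ pol (fun _ => Phat) s0 (Qtilde P r gamma sigma V) t
     - gamma * aV pol (fun _ => Phat) s0 V t.+1)%:E.
Proof.
rewrite bQ_aV /exp_cost -sumEFin; apply: eq_bigr => h _.
rewrite -sumEFin; apply: eq_bigr => s _.
rewrite -sumEFin; apply: eq_bigr => a _.
rewrite /stage_cost hex -[(gamma%:E * _)%E]EFinM -EFinD -EFinM; congr EFin; rewrite /Qtilde; ring.
Qed.

Lemma bQ0 (R : realType) (S A : finType) (pol : hpolicy S A R)
  (Pt : kseq S A R) (s0 : S) (Q : S -> A -> R) :
  bQ pol Pt s0 Q 0 = \sum_(a : A) pol [::] s0 a * Q s0 a.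
Proof.
rewrite /bQ sum_tuple0 /= -(sum_indic s0 (fun s => \sum_a pol [::] s a * Q s a)).
apply: eq_bigr => s _; rewrite mulr_sumr; apply: eq_bigr => a _; ring.
Qed.

Lemma normB (R : realType) (S : finType) (V : S -> R) :
  forall s, - (\sum_x `|V x|) <= V s <= \sum_x `|V x|.
Proof.
move=> s; rewrite -ler_norml (bigD1 s) //= lerDl sumr_ge0 // => x _.
Qed.

Lemma cost_lower (R : realType) (S A : finType) (P : S -> A -> S -> R)
  (r : S -> A -> R) (gamma : R) (hg : 0 <= gamma < 1)
  (sigma : (S -> R) -> (S -> R) -> R) (pol : hpolicy S A R) (Pt : kseq S A R)
  (s0 : S) (V : S -> R)
  (hpol : forall h x, is_dist (pol h x)) (hPt : admissible_kseq Pt)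
  (hcond : forall (h : seq (S * A)) s, (0 < size h)%N ->
     V s <= \sum_(a : A) pol h s a * Qtilde P r gamma sigma V s a) :
  ((\sum_(a : A) pol [::] s0 a * Qtilde P r gamma sigma V s0 a)%:E
     <= total_cost P r gamma sigma pol Pt s0)%E.
Proof.
have g0 : 0 <= gamma by case/andP: hg.
have hp : forall h x a, 0 <= pol h x a by move=> h x a; exact: (proj1 (hpol h x)).
have hw : forall (h : seq (S * A)) s, 0 <= hprob pol Pt s0 h s.
  by apply: hprob_ge0 => // u x b s'; exact: (proj1 (hPt u x b)).
rewrite -(bQ0 pol Pt) /total_cost.
apply: (series_lower (a := aV pol Pt s0 V) (B := \sum_x `|V x|)) => //.
- by move=> t; apply: aV_bound => //; exact: normB.
- by move=> t; exact: exp_cost_lower.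
- move=> t t0; rewrite /aV /bQ; apply: ler_sum => h _; apply: ler_sum => s _.
  have -> : \sum_(a : A) hprob pol Pt s0 h s * pol h s a * Qtilde P r gamma sigma V s a
    = hprob pol Pt s0 h s * \sum_(a : A) pol h s a * Qtilde P r gamma sigma V s a.
    by rewrite mulr_sumr; apply: eq_bigr => a _; rewrite mulrA.
  by apply: ler_wpM2l => //; apply: hcond; rewrite size_tuple.
Qed.

Lemma cost_upper (R : realType) (S A : finType) (P : S -> A -> S -> R)
  (r : S -> A -> R) (gamma : R) (hg : 0 <= gamma < 1)
  (sigma : (S -> R) -> (S -> R) -> R) (pol : hpolicy S A R)
  (Phat : S -> A -> S -> R) (s0 : S) (V : S -> R)
  (hpol : forall h x, is_dist (pol h x)) (hPh : forall s a, is_dist (Phat s a))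
  (hex : forall s a, penalty sigma (P s a) (Phat s a) =
                     (- sigma (P s a) V - expect (Phat s a) V)%:E)
  (hcond : forall (h : seq (S * A)) s, (0 < size h)%N ->
     \sum_(a : A) pol h s a * Qtilde P r gamma sigma V s a <= V s) :
  (total_cost P r gamma sigma pol (fun _ => Phat) s0 <=
   (\sum_(a : A) pol [::] s0 a * Qtilde P r gamma sigma V s0 a)%:E)%E.
Proof.
have hPt : admissible_kseq (fun _ : nat => Phat) by move=> t s a; exact: hPh.
have hp : forall h x a, 0 <= pol h x a by move=> h x a; exact: (proj1 (hpol h x)).
have hw : forall (h : seq (S * A)) s, 0 <= hprob pol (fun _ => Phat) s0 h s.
  by apply: hprob_ge0 => // u x b s'; exact: (proj1 (hPt u x b)).
rewrite -(bQ0 pol (fun _ => Phat)) /total_cost.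
apply: (series_upper (a := aV pol (fun _ => Phat) s0 V) (B := \sum_x `|V x|)) => //.
- by move=> t; apply: aV_bound => //; exact: normB.
- by move=> t; exact: exp_cost_exact.
- move=> t t0; rewrite /aV /bQ; apply: ler_sum => h _; apply: ler_sum => s _.
  have -> : \sum_(a : A) hprob pol (fun _ => Phat) s0 h s * pol h s a * Qtilde P r gamma sigma V s a
    = hprob pol (fun _ => Phat) s0 h s * \sum_(a : A) pol h s a * Qtilde P r gamma sigma V s a.
    by rewrite mulr_sumr; apply: eq_bigr => a _; rewrite mulrA.
  by apply: ler_wpM2l => //; apply: hcond; rewrite size_tuple.
Qed.
Lemma indic_dist (R : realType) (T : finType) (a0 : T) :
  is_dist (fun a : T => ((a == a0)%:R : R)).
Proof.
split; first by move=> a; rewrite ler0n.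
by rewrite (bigD1 a0) //= eqxx big1 ?addr0 // => a /negPf ->.
Qed.

Lemma exact_kernel (R : realType) (S A : finType) (P : S -> A -> S -> R)
  (sigma : (S -> R) -> (S -> R) -> R)
  (hsigma : forall s a, convex_risk_measure (sigma (P s a))) (V : S -> R) :
  exists Ph : S -> A -> S -> R, (forall s a, is_dist (Ph s a)) /\
    (forall s a, penalty sigma (P s a) (Ph s a) =
                 (- sigma (P s a) V - expect (Ph s a) V)%:E).
Proof.
have H : forall s, exists g : A -> S -> R, forall a, is_dist (g a) /\
    penalty sigma (P s a) (g a) = (- sigma (P s a) V - expect (g a) V)%:E.
  move=> s; have [g hg] := boolp.choice (fun a => penalty_exact (hsigma s a) V).
  by exists g.
have [Ph hPh] := boolp.choice H.
by exists Ph; split => s a; have [] := hPh s a.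
Qed.

Lemma adv_inf_ge (R : realType) (S A : finType) (P : S -> A -> S -> R)
  (r : S -> A -> R) (gamma : R) (hg : 0 <= gamma < 1)
  (sigma : (S -> R) -> (S -> R) -> R) (pol : hpolicy S A R) (s0 : S) (V : S -> R)
  (hpol : forall h x, is_dist (pol h x))
  (hcond : forall (h : seq (S * A)) s, (0 < size h)%N ->
     V s <= \sum_(a : A) pol h s a * Qtilde P r gamma sigma V s a) :
  ((\sum_(a : A) pol [::] s0 a * Qtilde P r gamma sigma V s0 a)%:E
     <= adv_inf P r gamma sigma pol s0)%E.
Proof.
apply: le_ereal_inf_tmp => _ [Pt hPt <-]; exact: cost_lower.
Qed.

Lemma adv_inf_le (R : realType) (S A : finType) (P : S -> A -> S -> R)
  (r : S -> A -> R) (gamma : R) (hg : 0 <= gamma < 1)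
  (sigma : (S -> R) -> (S -> R) -> R)
  (hsigma : forall s a, convex_risk_measure (sigma (P s a)))
  (pol : hpolicy S A R) (s0 : S) (V : S -> R)
  (hpol : forall h x, is_dist (pol h x))
  (hcond : forall (h : seq (S * A)) s, (0 < size h)%N ->
     \sum_(a : A) pol h s a * Qtilde P r gamma sigma V s a <= V s) :
  (adv_inf P r gamma sigma pol s0 <=
   (\sum_(a : A) pol [::] s0 a * Qtilde P r gamma sigma V s0 a)%:E)%E.
Proof.
have [Ph [hd hex]] := exact_kernel hsigma V.
apply: ge_ereal_inf; exists (total_cost P r gamma sigma pol (fun _ => Ph) s0).
  by exists (fun _ => Ph) => // t s a; exact: hd.
exact: cost_upper.
Qed.

Lemma cost_eq (R : realType) (S A : finType) (P : S -> A -> S -> R)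
  (r : S -> A -> R) (gamma : R) (hg : 0 <= gamma < 1)
  (sigma : (S -> R) -> (S -> R) -> R)
  (hsigma : forall s a, convex_risk_measure (sigma (P s a)))
  (pol : hpolicy S A R) (s0 : S) (V : S -> R)
  (hpol : forall h x, is_dist (pol h x))
  (hcond : forall (h : seq (S * A)) s, (0 < size h)%N ->
     \sum_(a : A) pol h s a * Qtilde P r gamma sigma V s a = V s)
  (Phat : S -> A -> S -> R)
  (hPh : forall s a, is_argmin_kernel sigma (P s a) V (Phat s a)) :
  adv_inf P r gamma sigma pol s0 =
   (\sum_(a : A) pol [::] s0 a * Qtilde P r gamma sigma V s0 a)%:E /\
  total_cost P r gamma sigma pol (fun _ => Phat) s0 =
   (\sum_(a : A) pol [::] s0 a * Qtilde P r gamma sigma V s0 a)%:E.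
Proof.
split; apply/le_anti/andP; split.
- by apply: adv_inf_le => // h s hs; rewrite hcond.
- by apply: adv_inf_ge => // h s hs; rewrite hcond.
- apply: cost_upper => //.
  + by move=> s a; case: (hPh s a).
  + by move=> s a; exact: argmin_exact.
  + by move=> h s hs; rewrite hcond.
- apply: cost_lower => //.
  + by move=> t s a; case: (hPh s a).
  + by move=> h s hs; rewrite hcond.
Qed.
Unset Implicit Arguments.
Set Strict Implicit.

Theorem mainTheorem3 (R : realType) (S A : finType)
  (P : S -> A -> S -> R) (hP : forall s a, is_dist (P s a))
  (r : S -> A -> R) (hr : forall s a, 0 <= r s a <= 1)
  (gamma : R) (hgamma : 0 <= gamma < 1)
  (sigma : (S -> R) -> (S -> R) -> R)
  (hsigma : forall s a, convex_risk_measure (sigma (P s a)))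
  (Vstar : S -> R) (hVstar : is_Vtilde_star P r gamma sigma Vstar) :
  (* Vbar* = Vtilde*,  Qbar* = Qtilde* *)
  (forall s, Vbar_star P r gamma sigma s = (Vstar s)%:E) /\
  (forall s a, Qbar_star P r gamma sigma s a
               = (Qtilde P r gamma sigma Vstar s a)%:E) /\
  (* attainment of the sup-inf by pi* and the stationary kernel Phat* *)
  (forall (pistar : S -> A),
     (forall s a, Qtilde P r gamma sigma Vstar s a
                  <= Qtilde P r gamma sigma Vstar s (pistar s)) ->
   forall (Phat : S -> A -> S -> R),
     (forall s a, is_argmin_kernel sigma (P s a) Vstar (Phat s a)) ->
   forall s,
     adv_inf P r gamma sigma (@det_pol R S A (fun _ x => pistar x)) s
       = Vbar_star P r gamma sigma s /\
     total_cost P r gamma sigma (@det_pol R S A (fun _ x => pistar x))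
       (fun _ => Phat) s = Vbar_star P r gamma sigma s) /\
  (* every stationary policy *)
  (forall (pi : S -> A -> R), is_policy pi ->
   forall (Vpi : S -> R), is_Vtilde_pi P r gamma sigma pi Vpi ->
     (forall s, Vbar_pi P r gamma sigma pi s = (Vpi s)%:E) /\
     (forall s a, Qbar_pi P r gamma sigma pi s a
                  = (Qtilde P r gamma sigma Vpi s a)%:E) /\
     (forall (Phat : S -> A -> S -> R),
        (forall s a, is_argmin_kernel sigma (P s a) Vpi (Phat s a)) ->
      forall s, total_cost P r gamma sigma (stat_pol pi) (fun _ => Phat) s
                = Vbar_pi P r gamma sigma pi s)).
Proof.
have hdet : forall (f : seq (S * A) -> S -> A) h x, is_dist (@det_pol R S A f h x).
  by move=> f h x; exact: indic_dist.
have hft : forall a0 (pol : hpolicy S A R), (forall h x, is_dist (pol h x)) ->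
    forall h x, is_dist (first_then a0 pol h x).
  by move=> a0 pol hp [|y h] x; [exact: indic_dist | exact: hp].
have sdet : forall (f : seq (S * A) -> S -> A) h s (Q0 : S -> A -> R),
    \sum_(a : A) @det_pol R S A f h s a * Q0 s a = Q0 s (f h s).
  by move=> f h s Q0; rewrite /det_pol (sum_indic (f h s) (Q0 s)).
have sft : forall a0 (pol : hpolicy S A R) s (Q0 : S -> A -> R),
    \sum_(a : A) first_then a0 pol [::] s a * Q0 s a = Q0 s a0.
  by move=> a0 pol s Q0; rewrite /first_then (sum_indic a0 (Q0 s)).
have [f0 hf0] := boolp.choice (fun s => proj1 (hVstar s)).
have Qle : forall s a, Qtilde P r gamma sigma Vstar s a <= Vstar s.
  by move=> s; exact: (proj2 (hVstar s)).
pose d0 := @det_pol R S A (fun _ x => f0 x).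
have hinf_f0 : forall s (pol : hpolicy S A R), (forall h x, is_dist (pol h x)) ->
    (forall (h : seq (S * A)) x, (0 < size h)%N -> pol h x = d0 h x) ->
    ((\sum_(a : A) pol [::] s a * Qtilde P r gamma sigma Vstar s a)%:E
      <= adv_inf P r gamma sigma pol s)%E.
  move=> s pol hp he; apply: adv_inf_ge => // h x hx.
  by rewrite he // sdet -hf0.
have hinf_f : forall s (f : seq (S * A) -> S -> A) (pol : hpolicy S A R),
    (forall h x, is_dist (pol h x)) ->
    (forall (h : seq (S * A)) x, (0 < size h)%N -> pol h x = @det_pol R S A f h x) ->
    (adv_inf P r gamma sigma pol s <=
      (\sum_(a : A) pol [::] s a * Qtilde P r gamma sigma Vstar s a)%:E)%E.
  move=> s f pol hp he; apply: adv_inf_le => // h x hx.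
  by rewrite he // sdet.
have V1 : forall s, Vbar_star P r gamma sigma s = (Vstar s)%:E.
  move=> s; apply/le_anti/andP; split.
  - apply: ge_ereal_sup => _ [f _ <-].
    apply: le_trans (hinf_f s f _ (hdet f) (fun _ _ _ => erefl)) _.
    by rewrite sdet lee_fin.
  - apply: le_ereal_sup_tmp; exists (adv_inf P r gamma sigma d0 s).
      by exists (fun _ x => f0 x).
    have := hinf_f0 s d0 (hdet _) (fun _ _ _ => erefl).
    by rewrite sdet -hf0.
split => //; split.
  move=> s a; apply/le_anti/andP; split.
  - apply: ge_ereal_sup => _ [f _ <-].
    apply: le_trans (hinf_f s f _ (hft a _ (hdet f)) _) _.
      by move=> [|y h] x.
    by rewrite sft.
  - apply: le_ereal_sup_tmp.
    exists (adv_inf P r gamma sigma (first_then a d0) s).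
      by exists (fun _ x => f0 x).
    have := hinf_f0 s (first_then a d0) (hft a _ (hdet _)).
    rewrite sft; apply; by move=> [|y h] x.
split.
  move=> pistar hpi Phat hPh s.
  have Qpi : forall s, Qtilde P r gamma sigma Vstar s (pistar s) = Vstar s.
    move=> s'; apply/le_anti/andP; split; first exact: Qle.
    by rewrite {1}hf0; exact: hpi.
  have [e1 e2] := cost_eq (V := Vstar) hgamma hsigma s (hdet (fun _ x => pistar x))
                   (fun h x _ => etrans (sdet _ _ _ _) (Qpi x)) hPh.
  by rewrite e1 e2 sdet Qpi V1.
move=> pi hpi Vpi hVpi.
have hst : forall h x, is_dist (stat_pol pi h x) by move=> h x; exact: hpi.
have sst : forall (h : seq (S * A)) x,
    \sum_(a : A) stat_pol pi h x a * Qtilde P r gamma sigma Vpi x a = Vpi x.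
  by move=> h x; rewrite /stat_pol -hVpi.
have VP : forall s, Vbar_pi P r gamma sigma pi s = (Vpi s)%:E.
  move=> s; apply/le_anti/andP; split.
  - have := adv_inf_le (P := P) (r := r) (sigma := sigma) (V := Vpi) hgamma hsigma s hst.
    by rewrite sst; apply => h x _; rewrite sst.
  - have := adv_inf_ge (P := P) (r := r) (sigma := sigma) (V := Vpi) hgamma s hst.
    by rewrite sst; apply => h x _; rewrite sst.
split => //; split.
  move=> s a; apply/le_anti/andP; split.
  - have := adv_inf_le (P := P) (r := r) (sigma := sigma) (V := Vpi) hgamma hsigma s (hft a _ hst).
    by rewrite sft; apply => -[|y h] x //= _; rewrite sst.
  - have := adv_inf_ge (P := P) (r := r) (sigma := sigma) (V := Vpi) hgamma s (hft a _ hst).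
    by rewrite sft; apply => -[|y h] x //= _; rewrite sst.
move=> Phat hPh s.
have [_ e2] := cost_eq (P := P) (r := r) (V := Vpi) hgamma hsigma s hst
                 (fun h x _ => sst h x) hPh.
by rewrite e2 VP sst.
Qed.
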